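(* Let $X=\{x,y,z\}$ and $U=\{u,v,w\}$ be distinct three-element subsets of $\Sigma^+$ such that $X^*$ and $U^*$ are $3$-maximal, $Z=X\cup U$, and let $g,h:A^*\to\Sigma^*$ (with $A=\{\mathbf a,\mathbf b,\mathbf c\}$) be the morphisms $g(\mathbf a)=x,g(\mathbf b)=y,g(\mathbf c)=z$, $h(\mathbf a)=u,h(\mathbf b)=v,h(\mathbf c)=w$. Assume $g$ is $Z$-marked. Let $o$ be a nonempty word with $g(\mathbf u)=h(\mathbf v)o$ for some $\mathbf u,\mathbf v\in A^*$, and let $\mathbf u_1,\mathbf u_2,\mathbf v_1,\mathbf v_2\in A^+$ satisfy $g(\mathbf u\mathbf u_1)=h(\mathbf v\mathbf v_1)$, $g(\mathbf u\mathbf u_2)=h(\mathbf v\mathbf v_2)$, $\mathrm{first}(\mathbf u_1)\neq\mathrm{first}(\mathbf u_2)$, and $\mathbf b=\mathrm{first}(\mathbf v_1)\neq\mathrm{first}(\mathbf v_2)=\mathbf b'$ (so $o$ is a nonempty critical overflow on $(\mathbf u,\mathbf v)$). Then $o=h(\mathbf b)\wedge_Z h(\mathbf b')$.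
   Context: $\Sigma^*$ is the free monoid over a countable alphabet $\Sigma$. A submonoid of rank (cardinality of minimal generating set) at most $k$ is $k$-maximal if it is not properly contained in any submonoid of $\Sigma^*$ of rank at most $k$. The free hull of $Z$ is the smallest free submonoid of $\Sigma^*$ containing $Z$, with basis $\mathrm{FB}(Z)$; each $w$ in it factors uniquely as $b_1\cdots b_n$ with $b_i\in\mathrm{FB}(Z)$, $\mathrm{first}_Z(w)=b_1$, and the words $b_1\cdots b_j$ ($1\le j\le n$) are the $Z$-prefixes of $w$. For $p,q$ in the free hull, $p\wedge_Z q$ is their longest common $Z$-prefix (a prefix of both which is a product of elements of $\mathrm{FB}(Z)$ consistent with both factorizations, empty if none). A morphism $f:A^*\to\Sigma^*$ with images in the free hull is $Z$-marked if $\mathrm{first}_Z(f(\mathbf a_1))\neq\mathrm{first}_Z(f(\mathbf a_2))$ for distinct letters. $\mathrm{first}(\mathbf t)$ is the first letter of $\mathbf t\in A^+$. *)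

(* Defs.v *)
From mathcomp Require Import all_boot.
Set Implicit Arguments. Unset Strict Implicit. Unset Printing Implicit Defensive.

Section Words.
Variable S : countType.
Notation word := (seq S).

Definition submonoid (M : word -> Prop) : Prop :=
  M [::] /\ forall p q, M p -> M q -> M (p ++ q).

Definition gen (X : seq word) (w : word) : Prop :=
  exists ws : seq word, {in ws, forall t, t \in X} /\ flatten ws = w.

Definition rank_le (M : word -> Prop) (k : nat) : Prop :=
  exists X : seq word, size X <= k /\ forall w, M w <-> gen X w.

Definition kmaximal (k : nat) (M : word -> Prop) : Prop :=
  submonoid M /\ rank_le M k /\
  forall N : word -> Prop, submonoid N -> rank_le N k ->
    (forall w, M w -> N w) -> forall w, N w -> M w.

(* irreducible elements (= minimal generating set) of a submonoid M *)
Definition base (M : word -> Prop) (w : word) : Prop :=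
  w != [::] /\ M w /\
  ~ (exists p q, p != [::] /\ q != [::] /\ M p /\ M q /\ w = p ++ q).

Definition free_submonoid (M : word -> Prop) : Prop :=
  submonoid M /\
  forall bs1 bs2 : seq word, {in bs1, forall b, base M b} ->
    {in bs2, forall b, base M b} -> flatten bs1 = flatten bs2 -> bs1 = bs2.

Definition free_hull (Z : word -> Prop) (w : word) : Prop :=
  forall M, free_submonoid M -> (forall t, Z t -> M t) -> M w.

Definition FB (Z : word -> Prop) (b : word) : Prop := base (free_hull Z) b.

Definition firstZ (Z : word -> Prop) (w b : word) : Prop :=
  exists bs, {in bs, forall t, FB Z t} /\ flatten bs = w /\
    exists rest, bs = b :: rest.

Definition Zprefix (Z : word -> Prop) (w r : word) : Prop :=
  exists bs, {in bs, forall t, FB Z t} /\ flatten bs = w /\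
    exists j, 1 <= j <= size bs /\ r = flatten (take j bs).

(* r = p /\_Z q : longest common Z-prefix, empty if there is none *)
Definition Zwedge (Z : word -> Prop) (p q r : word) : Prop :=
  (Zprefix Z p r /\ Zprefix Z q r /\
     forall r', Zprefix Z p r' -> Zprefix Z q r' -> size r' <= size r)
  \/ (r = [::] /\ ~ (exists r', Zprefix Z p r' /\ Zprefix Z q r')).

Definition morph (n : nat) (f : 'I_n -> word) (u : seq 'I_n) : word :=
  flatten (map f u).

Definition Zmarked (Z : word -> Prop) (n : nat) (f : 'I_n -> word) : Prop :=
  (forall i, free_hull Z (f i)) /\
  forall i j, i != j -> forall bi bj, firstZ Z (f i) bi -> firstZ Z (f j) bj -> bi <> bj.

(* the three letter images: a |-> x, b |-> y, c |-> z, with A = 'I_3 *)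
Definition mk3 (x y z : word) (i : 'I_3) : word :=
  match val i with 0 => x | 1 => y | _ => z end.

End Words.

(* Main.v *)
Require Import Defs.
From mathcomp Require Import all_boot.
From mathcomp Require Import zify.
From Stdlib Require Import Classical.
Set Implicit Arguments. Unset Strict Implicit. Unset Printing Implicit Defensive.

Lemma catI (T : Type) (s t1 t2 : seq T) : s ++ t1 = s ++ t2 -> t1 = t2.
Proof. by elim: s => [|a s IH] //= [] /IH. Qed.

Lemma cat_cmp (T : Type) (s1 t1 s2 t2 : seq T) : s1 ++ t1 = s2 ++ t2 ->
  (exists r, s2 = s1 ++ r) \/ (exists r, s1 = s2 ++ r /\ r <> [::]).
Proof.
elim: s1 s2 => [|a s1 IH] [|b s2] /=.
- by left; exists [::].
- by left; exists (b :: s2).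
- by right; exists (a :: s1).
- case=> -> /IH [[r ->]|[r [-> nr]]]; first by left; exists r.
  by right; exists r.
Qed.

Lemma allcat (T : eqType) (P : T -> Prop) (s1 s2 : seq T) :
  {in s1, forall t, P t} -> {in s2, forall t, P t} -> {in s1 ++ s2, forall t, P t}.
Proof. by move=> h1 h2 t; rewrite mem_cat => /orP [/h1|/h2]. Qed.

Definition stable (S : countType) (M : seq S -> Prop) :=
  forall a b c, M a -> M (b ++ c) -> M (a ++ b) -> M c -> M b.

Lemma flat_in (S : countType) (M : seq S -> Prop) bs : submonoid M ->
  (forall b, b \in bs -> M b) -> M (flatten bs).
Proof.
move=> [M0 Mc]; elim: bs => [|b bs IH] H //=.
apply: Mc; first by apply: H; rewrite inE eqxx.
by apply: IH => t ht; apply: H; rewrite inE ht orbT.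
Qed.

Lemma ltn_cat_l (T : Type) (p q : seq T) n : size (p ++ q) < n.+1 -> 0 < size q -> size p < n.
Proof. rewrite size_cat => *; lia. Qed.
Lemma ltn_cat_r (T : Type) (p q : seq T) n : size (p ++ q) < n.+1 -> 0 < size p -> size q < n.
Proof. rewrite size_cat => *; lia. Qed.

Lemma fact_ex (S : countType) (M : seq S -> Prop) : submonoid M -> forall w, M w ->
  exists bs, {in bs, forall b, base M b} /\ flatten bs = w.
Proof.
move=> hM w; elim: {w}(size w).+1 {-2}w (ltnSn (size w)) => // n IH w hw Mw.
case: (classic (base M w)) => hb.
  by exists [:: w]; split; [move=> b; rewrite inE => /eqP -> | rewrite /= cats0].
case: (altP (w =P [::])) => [->|wn]; first by exists [::].
have [p [q [pn [qn [Mp [Mq e]]]]]] :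
  exists p q : seq S, p != [::] /\ q != [::] /\ M p /\ M q /\ w = p ++ q.
  by apply: NNPP => hn; apply: hb.
have sp : size p < n.
  by apply: (ltn_cat_l (q := q)); [rewrite -e | rewrite lt0n size_eq0].
have sq : size q < n.
  by apply: (ltn_cat_r (p := p)); [rewrite -e | rewrite lt0n size_eq0].
have [bp [bpb bpf]] := IH p sp Mp.
have [bq [bqb bqf]] := IH q sq Mq.
by exists (bp ++ bq); split; [apply: allcat | rewrite flatten_cat bpf bqf e].
Qed.

Lemma base_M (S : countType) (M : seq S -> Prop) b : base M b -> M b.
Proof. by case=> _ []. Qed.

Lemma free_stable (S : countType) (M : seq S -> Prop) : free_submonoid M -> stable M.
Proof.
move=> [hM hu] a b c Ma Mbc Mab Mc.
have [Fa [Fab_ Faf]] := fact_ex hM Ma.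
have [Fbc [Fbcb Fbcf]] := fact_ex hM Mbc.
have [Fab [Fabb Fabf]] := fact_ex hM Mab.
have [Fc [Fcb Fcf]] := fact_ex hM Mc.
have E : Fa ++ Fbc = Fab ++ Fc.
  apply: hu; try by apply: allcat.
  by rewrite !flatten_cat Faf Fbcf Fabf Fcf catA.
case: (cat_cmp E) => [[r er]|[r [er _]]].
  have eb : b = flatten r.
    by apply: (@catI _ a); rewrite -Fabf er flatten_cat Faf.
  rewrite eb; apply: flat_in => // t ht; apply: base_M; apply: Fabb.
  by rewrite er mem_cat ht orbT.
have E' : a = (a ++ b) ++ flatten r by rewrite -{1}Faf er flatten_cat Fabf.
have : size a = size a + size b + size (flatten r) by rewrite {1}E' !size_cat.
case: b {Mbc Mab E E' Fbcf Fabf} => [|? ?] /=; first by case: hM.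
move=> *; lia.
Qed.

Lemma stable_step (S : countType) (M : seq S -> Prop) b1 c1 s r1 r2 :
  stable M -> base M b1 -> M c1 -> M r1 -> M r2 -> c1 != [::] ->
  b1 = c1 ++ s -> b1 ++ r1 = c1 ++ r2 -> s = [::].
Proof.
move=> st hb Mc Mr1 Mr2 cn eb E.
apply: NNPP => sn.
have e2 : s ++ r1 = r2 by apply: (@catI _ c1); rewrite catA -eb E.
have Ms : M s.
  apply: (st c1 s r1) => //; first by rewrite e2.
  by rewrite -eb; apply: base_M.
case: hb => _ [_]; apply.
exists c1, s; split; first exact: cn.
by split; [apply/eqP | split; [|split]].
Qed.

Lemma stable_uniq (S : countType) (M : seq S -> Prop) : submonoid M -> stable M ->
  forall bs1 bs2, {in bs1, forall b, base M b} -> {in bs2, forall b, base M b} ->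
  flatten bs1 = flatten bs2 -> bs1 = bs2.
Proof.
move=> hM st; elim=> [|b1 r1 IH] [|c1 r2] h1 h2 //= E.
- have [hc _] := h2 c1 (mem_head _ _).
  by move: E hc; clear h2; case: c1.
- have [hc _] := h1 b1 (mem_head _ _).
  by move: E hc; clear h1 IH; case: b1.
have h1' : {in r1, forall b, base M b}.
  by move=> t ht; apply: h1; rewrite inE ht orbT.
have h2' : {in r2, forall b, base M b}.
  by move=> t ht; apply: h2; rewrite inE ht orbT.
have Mr1 : M (flatten r1) by apply: flat_in => // t /h1' /base_M.
have Mr2 : M (flatten r2) by apply: flat_in => // t /h2' /base_M.
have hb1 := h1 b1 (mem_head _ _).
have hc1 := h2 c1 (mem_head _ _).
case: (cat_cmp E) => [[s es]|[s [es sn]]].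
  have s0 : s = [::].
    apply: (@stable_step S M c1 b1 s (flatten r2) (flatten r1) st hc1 (base_M hb1) Mr2 Mr1 _ es (esym E)).
    by case: hb1.
  move: E; rewrite es s0 cats0 => /catI E.
  by rewrite (IH r2 h1' h2' E).
exfalso; apply: sn.
apply: (@stable_step S M b1 c1 s (flatten r1) (flatten r2) st hb1 (base_M hc1) Mr1 Mr2 _ es E).
by case: hc1.
Qed.

Lemma hull_sub (S : countType) (Z : seq S -> Prop) : submonoid (free_hull Z).
Proof.
split; first by move=> M [[M0 _] _] _.
by move=> p q hp hq M hf hz; case: (hf) => [[_ Mc] _]; apply: Mc; [apply: hp|apply: hq].
Qed.

Lemma hull_stable (S : countType) (Z : seq S -> Prop) : stable (free_hull Z).
Proof.
move=> a b c ha hbc hab hc M hf hz.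
by apply: (free_stable hf (a := a) (c := c)); [apply: ha|apply: hbc|apply: hab|apply: hc].
Qed.

Lemma gen_sub (S : countType) (X : seq (seq S)) : submonoid (gen X).
Proof.
split; first by exists [::].
move=> p q [ws1 [h1 f1]] [ws2 [h2 f2]].
by exists (ws1 ++ ws2); split; [apply: allcat | rewrite flatten_cat f1 f2].
Qed.

Lemma gen_in (S : countType) (X : seq (seq S)) t : t \in X -> gen X t.
Proof. by move=> ht; exists [:: t]; split; [move=> s; rewrite inE => /eqP -> | rewrite /= cats0]. Qed.

Lemma gen_mono (S : countType) (X Y : seq (seq S)) w :
  (forall t, t \in X -> gen Y t) -> gen X w -> gen Y w.
Proof.
move=> hXY [ws [h f]]; rewrite -f; apply: flat_in; first exact: gen_sub.
by move=> t /h /hXY.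
Qed.

Lemma size_in_flatten (S : eqType) (ws : seq (seq S)) t : t \in ws -> size t <= size (flatten ws).
Proof.
elim: ws => [|a ws IH] //=; rewrite inE size_cat => /orP [/eqP ->|/IH h].
  exact: leq_addr.
exact: leq_trans h (leq_addl _ _).
Qed.

Lemma sz_cat_gt (T : Type) (Q s : seq T) : 0 < size Q -> size (Q ++ s) <= size s -> False.
Proof. rewrite size_cat => *; lia. Qed.

Lemma sz2 (T : Type) (Q s : seq T) c : 0 < size Q -> 0 < size s -> [:: c] = Q ++ s -> False.
Proof. move=> h1 h2 /(congr1 size); rewrite size_cat /= => *; lia. Qed.

Lemma core (S : countType) (U3 : seq (seq S)) (P Q T s : seq S) :
  kmaximal 3 (gen U3) -> (forall t, t \in U3 -> t = P \/ t = Q \/ t = T) ->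
  Q != [::] -> T != [::] -> P = Q ++ s -> s != [::] ->
  forall c, [:: c] = Q \/ [:: c] = T.
Proof.
move=> [_ [_ hmax]] hall hQ hT eP hs c.
have sU : gen U3 s.
  apply: (hmax (gen [:: Q; s; T])).
  - exact: gen_sub.
  - by exists [:: Q; s; T].
  - move=> w; apply: gen_mono => t /hall [->|[->|->]].
    + rewrite eP; apply: (gen_sub _).2; apply: gen_in; by rewrite !inE eqxx ?orbT.
    + by apply: gen_in; rewrite !inE eqxx ?orbT.
    + by apply: gen_in; rewrite !inE eqxx ?orbT.
  - by apply: gen_in; rewrite !inE eqxx ?orbT.
have sQT : gen [:: Q; T] s.
  case: sU => ws [hws fws]; exists ws; split=> // t ht.
  case: (hall t (hws t ht)) => [et|[->|->]]; last 2 first.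
  - by rewrite !inE eqxx.
  - by rewrite !inE eqxx orbT.
  have := size_in_flatten ht; rewrite fws et eP => h.
  by exfalso; apply: (sz_cat_gt (Q := Q) _ h); rewrite lt0n size_eq0.
have PQT : gen [:: Q; T] P.
  by rewrite eP; apply: (gen_sub _).2 => //; apply: gen_in; rewrite inE eqxx.
have cU : gen U3 [:: c].
  apply: (hmax (gen [:: Q; T; [:: c]])).
  - exact: gen_sub.
  - by exists [:: Q; T; [:: c]].
  - move=> w; apply: gen_mono => t /hall [->|[->|->]].
    + apply: gen_mono PQT => t'; rewrite !inE => /orP [] /eqP ->;
      by apply: gen_in; rewrite !inE eqxx ?orbT.
    + by apply: gen_in; rewrite !inE eqxx ?orbT.
    + by apply: gen_in; rewrite !inE eqxx ?orbT.
  - by apply: gen_in; rewrite !inE eqxx ?orbT.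
case: cU => ws [hws fws].
case: ws hws fws => [|t ws] hws //= fws.
have tn : t != [::].
  case: (hall t (hws t (mem_head _ _))) => [->|[->|->]] //.
  by rewrite eP -size_eq0 size_cat addn_eq0 size_eq0 (negbTE hQ).
have et : t = [:: c].
  case: t tn fws {hws} => [|d t'] //= _ [-> e].
  by case: t' e.
case: (hall t (hws t (mem_head _ _))) => [|[<-|<-]]; [|by left|by right].
move=> eP'; exfalso; apply: (sz2 (Q := Q) (s := s) (c := c)).
- by rewrite lt0n size_eq0.
- by rewrite lt0n size_eq0.
- by rewrite -eP -eP' et.
Qed.

Lemma flatten_single (T : Type) (W : seq T) : flatten (map (fun e => [:: e]) W) = W.
Proof. by elim: W => //= a W ->. Qed.

Lemma letters_contra (S : countType) (Zp : seq S -> Prop) x y z (Q T : seq S) :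
  Zmarked Zp (mk3 x y z) -> x != [::] -> y != [::] -> z != [::] -> Zp Q -> Zp T ->
  (forall c, [:: c] = Q \/ [:: c] = T) -> False.
Proof.
move=> [_ hm] hx hy hz hQ hT L.
have FBc : forall c, FB Zp [:: c].
  move=> c; split=> //; split.
    by move=> M _ hz'; apply: hz'; case: (L c) => ->.
  move=> [p [q [hp [hq [_ [_ e]]]]]].
  by apply: (sz2 _ _ e); rewrite lt0n size_eq0.
have fW : forall W d W', W = d :: W' -> firstZ Zp W [:: d].
  move=> W d W' eW; exists (map (fun e => [:: e]) W); split.
    by move=> t /mapP [e _ ->].
  by split; [exact: flatten_single | rewrite eW; eexists].
case: x hx hm => [|dx x'] // _ hm.
case: y hy hm => [|dy y'] // _ hm.
case: z hz hm => [|dz z'] // _ hm.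
have h01 := hm (@Ordinal 3 0 isT) (@Ordinal 3 1 isT) isT _ _
  (fW _ dx x' erefl) (fW _ dy y' erefl).
have h02 := hm (@Ordinal 3 0 isT) (@Ordinal 3 2 isT) isT _ _
  (fW _ dx x' erefl) (fW _ dz z' erefl).
have h12 := hm (@Ordinal 3 1 isT) (@Ordinal 3 2 isT) isT _ _
  (fW _ dy y' erefl) (fW _ dz z' erefl).
case: (L dx) => ex; case: (L dy) => ey; case: (L dz) => ez; congruence.
Qed.

Lemma mk3_inj (S : countType) (a b c : seq S) (i j : 'I_3) :
  uniq [:: a; b; c] -> mk3 a b c i = mk3 a b c j -> i = j.
Proof.
move=> hu e; apply: val_inj; move: hu e.
case: i => [[|[|[|m]]] hi] //; case: j => [[|[|[|n]]] hj] //= hu e;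
  move: hu; rewrite /mk3 /= in e; rewrite /= e !inE eqxx /= ?orbT ?andbF //.
Qed.

Lemma morph_cat (S : countType) n (f : 'I_n -> seq S) s t :
  morph f (s ++ t) = morph f s ++ morph f t.
Proof. by rewrite /morph map_cat flatten_cat. Qed.

Lemma morph_cons (S : countType) n (f : 'I_n -> seq S) a s :
  morph f (a :: s) = f a ++ morph f s.
Proof. by []. Qed.

Lemma size_flat_take (T : Type) (A : seq (seq T)) j :
  size (flatten (take j A)) <= size (flatten A).
Proof. by rewrite -{2}(cat_take_drop j A) flatten_cat size_cat leq_addr. Qed.

Lemma prefix_split (T : Type) (A Tl : seq (seq T)) j :
  size (flatten A) < size (flatten (take j (A ++ Tl))) ->
  exists k, flatten (take j (A ++ Tl)) = flatten A ++ flatten (take k Tl).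
Proof.
rewrite take_cat; case: ifP => hj.
  by rewrite ltnNge size_flat_take.
by move=> _; exists (j - size A); rewrite flatten_cat.
Qed.

Lemma take_cons (T : Type) (Tl : seq T) k e R :
  take k Tl = e :: R -> exists T', Tl = e :: T'.
Proof. by case: Tl => [|t T']; case: k => [|k] //= [-> _]; exists T'. Qed.

Theorem lemma4p6 (S : countType) (x y z u v w : seq S)
  (hx : x != [::]) (hy : y != [::]) (hz : z != [::])
  (hu : u != [::]) (hv : v != [::]) (hw : w != [::])
  (hX3 : uniq [:: x; y; z]) (hU3 : uniq [:: u; v; w])
  (hXU : ~ (forall t, (t \in [:: x; y; z]) = (t \in [:: u; v; w])))
  (hXmax : kmaximal 3 (gen [:: x; y; z]))
  (hUmax : kmaximal 3 (gen [:: u; v; w]))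
  (hmark : Zmarked (fun t => t \in [:: x; y; z; u; v; w]) (mk3 x y z))
  (o : seq S) (ho : o != [::]) (uu vv uu1 uu2 vv1 vv2 : seq 'I_3)
  (hov : morph (mk3 x y z) uu = morph (mk3 u v w) vv ++ o)
  (hu1 : uu1 != [::]) (hu2 : uu2 != [::]) (hv1 : vv1 != [::]) (hv2 : vv2 != [::])
  (he1 : morph (mk3 x y z) (uu ++ uu1) = morph (mk3 u v w) (vv ++ vv1))
  (he2 : morph (mk3 x y z) (uu ++ uu2) = morph (mk3 u v w) (vv ++ vv2))
  (hf1 : head ord0 uu1 <> head ord0 uu2)
  (hf2 : head ord0 vv1 <> head ord0 vv2) :
  Zwedge (fun t => t \in [:: x; y; z; u; v; w])
    (mk3 u v w (head ord0 vv1)) (mk3 u v w (head ord0 vv2)) o.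
Proof.
pose Zp : seq S -> Prop := (fun t => t \in [:: x; y; z; u; v; w]).
change (Zmarked Zp (mk3 x y z)) in hmark.
change (Zwedge Zp (mk3 u v w (head ord0 vv1)) (mk3 u v w (head ord0 vv2)) o).
have HZ : forall t, Zp t -> free_hull Zp t by move=> t ht M _ hz'; apply: hz'.
have Hsub := @hull_sub S Zp.
have Hst := @hull_stable S Zp.
have Huniq := stable_uniq Hsub Hst.
have Hfact := fact_ex Hsub.
have gZ : forall i, Zp (mk3 x y z i).
  by case=> [[|[|[|m]]] hi] //=; rewrite /Zp !inE eqxx ?orbT.
have hZ : forall i, Zp (mk3 u v w i).
  by case=> [[|[|[|m]]] hi] //=; rewrite /Zp !inE eqxx ?orbT.
have gne : forall i, mk3 x y z i != [::] by case=> [[|[|[|m]]] hi].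
have hne : forall i, mk3 u v w i != [::] by case=> [[|[|[|m]]] hi].
have Hmorph : forall (f : 'I_3 -> seq S), (forall i, Zp (f i)) -> forall s,
    free_hull Zp (morph f s).
  move=> f hf s; apply: flat_in => // t /mapP [i _ ->]; exact: HZ.
case: uu1 hu1 he1 hf1 => [|a1 q1] // _ he1 hf1.
case: uu2 hu2 he2 hf1 => [|a2 q2] // _ he2 hf1.
case: vv1 hv1 he1 hf2 => [|b1 r1] // _ he1 hf2.
case: vv2 hv2 he2 hf2 => [|b2 r2] // _ he2 hf2.
rewrite /= in hf1 hf2 *.
have K1 : morph (mk3 u v w) (b1 :: r1) = o ++ morph (mk3 x y z) (a1 :: q1).
  by move: he1; rewrite !morph_cat hov -catA => /catI.
have K2 : morph (mk3 u v w) (b2 :: r2) = o ++ morph (mk3 x y z) (a2 :: q2).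
  by move: he2; rewrite !morph_cat hov -catA => /catI.
have Ho : free_hull Zp o.
  apply: (Hst (morph (mk3 u v w) vv) o (morph (mk3 x y z) (a1 :: q1))).
  - exact: Hmorph.
  - by rewrite -K1; apply: Hmorph.
  - by rewrite -hov; apply: Hmorph.
  - exact: Hmorph.
have [Fo [Fob Fof]] := Hfact o Ho.
have [Fa1 [Fa1b Fa1f]] := Hfact _ (HZ _ (gZ a1)).
have [Fq1 [Fq1b Fq1f]] := Hfact _ (Hmorph _ gZ q1).
have [Fb1 [Fb1b Fb1f]] := Hfact _ (HZ _ (hZ b1)).
have [Fr1 [Fr1b Fr1f]] := Hfact _ (Hmorph _ hZ r1).
have [Fa2 [Fa2b Fa2f]] := Hfact _ (HZ _ (gZ a2)).
have [Fq2 [Fq2b Fq2f]] := Hfact _ (Hmorph _ gZ q2).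
have [Fb2 [Fb2b Fb2f]] := Hfact _ (HZ _ (hZ b2)).
have [Fr2 [Fr2b Fr2f]] := Hfact _ (Hmorph _ hZ r2).
case: Fa1 Fa1b Fa1f => [|d1 Fa1] Fa1b Fa1f.
  by move: (gne a1); rewrite -Fa1f.
case: Fa2 Fa2b Fa2f => [|d2 Fa2] Fa2b Fa2f.
  by move: (gne a2); rewrite -Fa2f.
have E1 : Fo ++ (d1 :: Fa1) ++ Fq1 = Fb1 ++ Fr1.
  apply: Huniq; [apply: allcat => //; exact: allcat | exact: allcat |].
  by rewrite !flatten_cat Fof Fa1f Fq1f Fb1f Fr1f -morph_cons -K1.
have E2 : Fo ++ (d2 :: Fa2) ++ Fq2 = Fb2 ++ Fr2.
  apply: Huniq; [apply: allcat => //; exact: allcat | exact: allcat |].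
  by rewrite !flatten_cat Fof Fa2f Fq2f Fb2f Fr2f -morph_cons -K2.
have hc : d1 <> d2.
  apply: (hmark.2 a1 a2 _ d1 d2); first by apply/eqP.
  - by exists (d1 :: Fa1); split=> //; split=> //; exists Fa1.
  - by exists (d2 :: Fa2); split=> //; split=> //; exists Fa2.
have bad : forall p q s, p != q -> mk3 u v w p = mk3 u v w q ++ s -> False.
  move=> p q s npq e.
  have ns : s != [::].
    apply/eqP => s0; move: e; rewrite s0 cats0 => /(mk3_inj hU3) epq.
    by rewrite epq eqxx in npq.
  have [T [hall [hT hTn]]] : exists T, (forall t, t \in [:: u; v; w] ->
      t = mk3 u v w p \/ t = mk3 u v w q \/ t = T) /\ Zp T /\ T != [::].
    move: npq {e}; case: p => [[|[|[|pm]]] hp] //; case: q => [[|[|[|qm]]] hq] // _ /=;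
    solve [ exists u; split; [move=> t; rewrite !inE => /or3P [] /eqP ->;
              first [by left | by right; left | by right; right]
           | by split; [rewrite /Zp !inE eqxx ?orbT|]]
         | exists v; split; [move=> t; rewrite !inE => /or3P [] /eqP ->;
              first [by left | by right; left | by right; right]
           | by split; [rewrite /Zp !inE eqxx ?orbT|]]
         | exists w; split; [move=> t; rewrite !inE => /or3P [] /eqP ->;
              first [by left | by right; left | by right; right]
           | by split; [rewrite /Zp !inE eqxx ?orbT|]] ].
  have L := core hUmax hall (hne q) hTn e ns.
  exact: (letters_contra hmark hx hy hz (hZ q) hT L).
have C1 : (exists T1, Fb1 = Fo ++ T1) \/ (exists X1, o = mk3 u v w b1 ++ X1).
  case: (cat_cmp E1) => [[r er]|[r [er _]]]; [left; by exists r | right; exists (flatten r)].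
  by rewrite -Fof er flatten_cat Fb1f.
have C2 : (exists T2, Fb2 = Fo ++ T2) \/ (exists X2, o = mk3 u v w b2 ++ X2).
  case: (cat_cmp E2) => [[r er]|[r [er _]]]; [left; by exists r | right; exists (flatten r)].
  by rewrite -Fof er flatten_cat Fb2f.
have n12 : b1 != b2 by apply/eqP.
have n21 : b2 != b1 by apply/eqP => e; apply: hf2.
case: C1 => [[T1 eT1]|[X1 eX1]]; case: C2 => [[T2 eT2]|[X2 eX2]]; last first.
- rewrite eX1 in eX2.
  case: (cat_cmp eX2) => [[r er]|[r [er _]]].
    by exfalso; exact: (bad b2 b1 r n21 er).
  by exfalso; exact: (bad b1 b2 r n12 er).
- exfalso; apply: (bad b2 b1 (X1 ++ flatten T2)) => //.
  by rewrite -Fb2f eT2 flatten_cat Fof eX1 catA.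
- exfalso; apply: (bad b1 b2 (X2 ++ flatten T1)) => //.
  by rewrite -Fb1f eT1 flatten_cat Fof eX2 catA.
rewrite eT1 in Fb1b Fb1f E1; rewrite eT2 in Fb2b Fb2f E2.
have D1 : d1 :: Fa1 ++ Fq1 = T1 ++ Fr1 by move: E1; rewrite -catA => /catI.
have D2 : d2 :: Fa2 ++ Fq2 = T2 ++ Fr2 by move: E2; rewrite -catA => /catI.
have Fon : 0 < size Fo.
  rewrite lt0n size_eq0; apply/eqP => F0; move: ho; rewrite -Fof F0.
  by [].
left; split; [|split].
- exists (Fo ++ T1); split=> //; split=> //; exists (size Fo); split.
    by rewrite Fon size_cat leq_addr.
  by rewrite take_size_cat // Fof.
- exists (Fo ++ T2); split=> //; split=> //; exists (size Fo); split.
    by rewrite Fon size_cat leq_addr.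
  by rewrite take_size_cat // Fof.
move=> r' [bs [bsb [bsf [j [hj er]]]]] [bs' [bsb' [bsf' [j' [hj' er']]]]].
have ebs : bs = Fo ++ T1 by apply: Huniq => //; rewrite bsf -Fb1f.
have ebs' : bs' = Fo ++ T2 by apply: Huniq => //; rewrite bsf' -Fb2f.
rewrite leqNgt; apply/negP => lt.
have := @prefix_split _ Fo T1 j; rewrite -ebs -er Fof => /(_ lt) [k1 e1].
have := @prefix_split _ Fo T2 j'; rewrite -ebs' -er' Fof => /(_ lt) [k2 e2].
have ek : flatten (take k1 T1) = flatten (take k2 T2).
  by apply: (@catI _ o); rewrite -e1 -e2.
have et : take k1 T1 = take k2 T2.
  apply: Huniq => //.
  - by move=> t /mem_take ht; apply: Fb1b; rewrite mem_cat ht orbT.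
  - by move=> t /mem_take ht; apply: Fb2b; rewrite mem_cat ht orbT.
case e1t : (take k1 T1) => [|e R].
  by move: lt; rewrite e1 e1t cats0 ltnn.
have [T1' eT1'] := take_cons e1t.
rewrite e1t in et.
have [T2' eT2'] := take_cons (esym et).
move: D1 D2; rewrite eT1' eT2' /= => [[ed1 _] [ed2 _]].
by apply: hc; rewrite ed1 ed2.
Qed.
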